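(* Let $S_1=\sum_{k=0}^\infty\frac{1}{(3k+2)(3k+4)}=\frac12-\frac{\sqrt3\pi}{18}$. Then \begin{align*} &\sum_{n=0}^\infty \frac{1}{(3n+1)(3n+4)\binom{2n+2}{n+1}}=\frac23 S_1,\\ &\sum_{n=0}^\infty \frac{(27n^2+51n+23)(\frac23)_n}{(3n+1)(3n+4)(n+1)(\frac{11}{6})_n}\,\frac{1}{4^n}=30S_1,\\ &\sum_{n=0}^\infty \frac{189n^3+495n^2+414n+110}{(6n+1)(6n+7)(6n+5)(2n+1)}\,\frac{1}{\binom{6n}{3n}}=16S_1,\\ &\sum_{n=0}^\infty \frac{270n^3+720n^2+633n+185}{(n+1)(6n+7)}\,\frac{(\frac23)_n^2}{(\frac43)_n(\frac{11}{6})_n}\,\frac{1}{(-4)^n}=120S_1,\\ &\sum_{n=0}^\infty (30n^2+45n+16)\,\frac{(\frac16)_n(\frac23)_n^2(1)_n}{(\frac43)_n(\frac73)_n(\frac32)_n(\frac{11}{6})_n}\,\frac{1}{(-4)^n}=80S_1. \end{align*}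
   Context: $(x)_n=\Gamma(x+n)/\Gamma(x)=x(x+1)\cdots(x+n-1)$ denotes the rising factorial (Pochhammer symbol). *)

(* Defs.v *)
From Stdlib Require Import Reals.
From Coquelicot Require Import Coquelicot.
Open Scope R_scope.

Fixpoint poch (x : R) (n : nat) : R :=
  match n with
  | O => 1
  | S m => poch x m * (x + INR m)
  end.

Definition S1_term (k : nat) : R := / ((3 * INR k + 2) * (3 * INR k + 4)).

Definition binom (n k : nat) : R := Binomial.C n k.

(* Main.v *)
Require Import Defs.
From Stdlib Require Import Reals.
From Coquelicot Require Import Coquelicot.
From Stdlib Require Import Lra Lia Factorial.
Open Scope R_scope.

Lemma INR_ge0 n : 0 <= INR n. Proof. apply pos_INR. Qed.

Lemma poch_S a n : poch a (S n) = poch a n * (a + INR n).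
Proof. reflexivity. Qed.

Lemma poch_pos a n : 0 < a -> 0 < poch a n.
Proof.
  intro Ha. induction n. simpl; lra.
  rewrite poch_S. apply Rmult_lt_0_compat. exact IHn.
  pose proof (INR_ge0 n); lra.
Qed.

Lemma poch_shift a n : 0 < a -> poch (a + 1) n = poch a n * (a + INR n) / a.
Proof.
  intro Ha. induction n. simpl. field. lra.
  rewrite !poch_S, IHn, S_INR. field. lra.
Qed.

Lemma poch_add a n m : poch a (n + m) = poch a n * poch (a + INR n) m.
Proof.
  induction m. rewrite Nat.add_0_r. simpl. ring.
  rewrite Nat.add_succ_r, !poch_S, IHm, plus_INR. ring.
Qed.

Ltac posi := repeat (apply Rplus_le_le_0_compat || apply Rmult_le_pos || apply pow_le); try lra; try apply INR_ge0.

Lemma test (X M : R) : 0 <= X -> 0 <= M -> 0 <= (X + 2/3 + M) * (X + 4/3) * 3 + X * M * M.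
Proof. intros. ring_simplify. posi. Qed.

Lemma F_bound (F : nat -> nat -> R) (c q : R) (b : nat -> R) :
  0 <= q -> (forall k, F k O = c * b k) -> (forall k, 0 <= b k) ->
  (forall k n, exists r, F k (S n) = F k n * r /\ Rabs r <= q) ->
  forall k n, Rabs (F k n) <= (Rabs c * q ^ n) * b k.
Proof.
  intros Hq H0 Hb Hr k n. induction n.
  - rewrite H0, Rabs_mult, (Rabs_right (b k)) by (apply Rle_ge, Hb). simpl. lra.
  - destruct (Hr k n) as [r [E Hr']]. rewrite E, Rabs_mult.
    replace (Rabs c * q ^ S n * b k) with ((Rabs c * q ^ n * b k) * q) by (simpl; ring).
    apply Rmult_le_compat; try apply Rabs_pos; assumption.
Qed.

Lemma beta_lim c q : 0 <= q < 1 -> is_lim_seq (fun n => Rabs c * q ^ n) 0.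
Proof.
  intro Hq. replace (Finite 0) with (Rbar_mult (Rabs c) 0) by (simpl; f_equal; ring).
  apply is_lim_seq_scal_l. apply is_lim_seq_geom. rewrite Rabs_right; lra.
Qed.

Lemma inv_lim : is_lim_seq (fun k => / (INR k + 1)) 0.
Proof.
  replace (Finite 0) with (Rbar_inv p_infty) by reflexivity.
  apply is_lim_seq_inv; [| discriminate].
  apply is_lim_seq_le_p_loc with INR.
  exists O. intros n _. lra.
  apply is_lim_seq_INR.
Qed.

Lemma G_lim (g : nat -> R) D :
  (forall k, Rabs (g k) <= D * ((INR k + 1) * S1_term k)) -> is_lim_seq g 0.
Proof.
  intro H. apply is_lim_seq_abs_0.
  apply is_lim_seq_le_le with (fun _ => 0) (fun k => Rabs D * / (INR k + 1)).
  - intro k. split. apply Rabs_pos. eapply Rle_trans. apply H.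
    unfold S1_term. pose proof (INR_ge0 k).
    assert (E : (INR k + 1) * / ((3 * INR k + 2) * (3 * INR k + 4)) <= / (INR k + 1)).
    { apply (Rmult_le_reg_r ((INR k + 1) * ((3 * INR k + 2) * (3 * INR k + 4)))).
      nra. field_simplify; try lra. nra. }
    assert (E0 : 0 <= (INR k + 1) * / ((3 * INR k + 2) * (3 * INR k + 4))).
    { apply Rmult_le_pos. lra. left; apply Rinv_0_lt_compat; nra. }
    pose proof (Rle_abs D).
    apply Rle_trans with (Rabs D * ((INR k + 1) * / ((3 * INR k + 2) * (3 * INR k + 4)))).
    apply Rmult_le_compat_r; lra. apply Rmult_le_compat_l. apply Rabs_pos. exact E.
  - apply is_lim_seq_const.
  - replace (Finite 0) with (Rbar_mult (Rabs D) 0) by (simpl; f_equal; ring).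
    apply is_lim_seq_scal_l. apply inv_lim.
Qed.
Lemma series_of_lim (a : nat -> R) (l : R) :
  is_lim_seq (sum_n a) l -> is_series a l.
Proof. intro H. exact H. Qed.

Lemma lim_of_series (a : nat -> R) (l : R) :
  is_series a l -> is_lim_seq (sum_n a) l.
Proof. intro H. exact H. Qed.

Lemma tele_series (u : nat -> R) :
  is_lim_seq u 0 -> is_series (fun k => u k - u (S k)) (u O).
Proof.
  intro H. apply series_of_lim.
  assert (E : forall n, sum_n (fun k => u k - u (S k)) n = u O - u (S n)).
  { induction n. rewrite sum_O. reflexivity.
    rewrite sum_Sn, IHn. unfold plus; simpl. ring. }
  apply is_lim_seq_ext with (fun n => u O - u (S n)).
  intro n; rewrite E; reflexivity.
  replace (Finite (u O)) with (Rbar_minus (u O) 0) by (simpl; f_equal; ring).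
  apply is_lim_seq_minus'. apply is_lim_seq_const.
  apply (is_lim_seq_incr_1 u 0). exact H.
Qed.

Lemma wz_series (a b : nat -> R) (F G : nat -> nat -> R) (beta : nat -> R) (c L : R) :
  is_series b L ->
  (forall k, 0 <= b k) ->
  (forall k, F k O = c * b k) ->
  (forall k n, F k n - F k (S n) = G k n - G (S k) n) ->
  (forall n, is_lim_seq (fun k => G k n) 0) ->
  (forall n, G O n = a n) ->
  (forall k n, Rabs (F k n) <= beta n * b k) ->
  is_lim_seq beta 0 ->
  is_series a (c * L).
Proof.
  intros Hb Hb0 HF0 Htel HG HG0 HFb Hbeta.
  assert (Hexb : ex_series b) by (exists L; exact Hb).
  assert (HexF : forall n, ex_series (fun k => F k n)).
  { intro n. apply (ex_series_le (fun k => F k n) (fun k => beta n * b k)).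
    intro k. apply HFb. apply (ex_series_scal_l (beta n) b Hexb). }
  assert (HexFa : forall n, ex_series (fun k => Rabs (F k n))).
  { intro n. apply (ex_series_le (fun k => Rabs (F k n)) (fun k => beta n * b k)).
    intro k. unfold norm; simpl. rewrite Rabs_Rabsolu. apply HFb.
    apply (ex_series_scal_l (beta n) b Hexb). }
  set (W := fun n => Series (fun k => F k n)).
  assert (HW : forall n, a n = W n - W (S n)).
  { intro n. rewrite <- HG0.
    assert (H1 : is_series (fun k => F k n - F k (S n)) (G O n)).
    { apply is_series_ext with (fun k => G k n - G (S k) n).
      intro k; rewrite Htel; reflexivity.
      apply (tele_series (fun k => G k n)). apply HG. }
    assert (H2 : is_series (fun k => F k n - F k (S n)) (W n - W (S n))).
    { apply (is_series_minus (fun k => F k n) (fun k => F k (S n))).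
      apply Series_correct, HexF. apply Series_correct, HexF. }
    apply is_series_unique in H1. apply is_series_unique in H2. congruence. }
  assert (HW0 : W O = c * L).
  { unfold W. apply is_series_unique.
    apply is_series_ext with (fun k => c * b k). intro k; rewrite HF0; reflexivity.
    apply (is_series_scal_l c b L Hb). }
  assert (HWb : forall n, Rabs (W n) <= beta n * L).
  { intro n. unfold W. eapply Rle_trans. apply Series_Rabs, HexFa.
    replace (beta n * L) with (Series (fun k => beta n * b k)).
    apply Series_le. intro k; split. apply Rabs_pos. apply HFb.
    apply (ex_series_scal_l (beta n) b Hexb).
    apply is_series_unique. apply (is_series_scal_l (beta n) b L Hb). }
  assert (HWl : is_lim_seq W 0).
  { apply is_lim_seq_le_le with (fun n => - (beta n * L)) (fun n => beta n * L).
    intro n. specialize (HWb n). split; apply Rabs_le_between in HWb; lra.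
    replace (Finite 0) with (Rbar_opp (Rbar_mult 0 L)) by (simpl; f_equal; ring).
    apply -> is_lim_seq_opp. apply is_lim_seq_scal_r. exact Hbeta.
    replace (Finite 0) with (Rbar_mult 0 L) by (simpl; f_equal; ring).
    apply is_lim_seq_scal_r. exact Hbeta. }
  apply series_of_lim.
  apply is_lim_seq_ext with (fun n => W O - W (S n)).
  { intro n. induction n. rewrite sum_O, HW. reflexivity.
    rewrite sum_Sn, <- IHn, (HW (S n)). unfold plus; simpl. ring. }
  rewrite <- HW0.
  replace (Finite (W O)) with (Rbar_minus (W O) 0) by (simpl; f_equal; ring).
  apply is_lim_seq_minus'. apply is_lim_seq_const.
  apply (is_lim_seq_incr_1 W 0). exact HWl.
Qed.

Lemma abs_div_le num den q : 0 <= num -> 0 < den -> num <= q * den -> Rabs (num / den) <= q.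
Proof.
  intros H1 H2 H3. rewrite Rabs_right.
  2:{ apply Rle_ge. apply Rmult_le_pos; [lra|]. left; apply Rinv_0_lt_compat; lra. }
  apply (Rmult_le_reg_r den); [lra|]. field_simplify; lra.
Qed.

Lemma fact_S_INR m : INR (fact (S m)) = (INR m + 1) * INR (fact m).
Proof. change (fact (S m)) with (S m * fact m)%nat. rewrite mult_INR, S_INR. ring. Qed.

Lemma binom_mid_step n :
  binom (2 * S n + 2) (S n + 1) =
  binom (2 * n + 2) (n + 1) * ((2 * INR n + 3) * (2 * INR n + 4)) / ((INR n + 2) * (INR n + 2)).
Proof.
  unfold binom, Binomial.C.
  replace (2 * S n + 2 - (S n + 1))%nat with (S (S n))%nat by lia.
  replace (2 * n + 2 - (n + 1))%nat with (S n) by lia.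
  replace (S n + 1)%nat with (S (S n)) by lia.
  replace (n + 1)%nat with (S n) by lia.
  replace (2 * S n + 2)%nat with (S (S (2 * n + 2))) by lia.
  rewrite (fact_S_INR (S (2 * n + 2))), (fact_S_INR (2 * n + 2)), (fact_S_INR (S n)).
  rewrite !S_INR, !plus_INR, !mult_INR. simpl (INR 2).
  pose proof (INR_fact_neq_0 (S n)). pose proof (INR_fact_neq_0 (2 * n + 2)).
  pose proof (INR_ge0 n).
  field. repeat split; lra.
Qed.

Definition qq a n := poch a n / poch a (2 * n + 1).

Lemma qq_pos a n : 0 < a -> 0 < qq a n.
Proof.
  intro Ha. unfold qq. apply Rmult_lt_0_compat. apply poch_pos; lra.
  apply Rinv_0_lt_compat, poch_pos; lra.
Qed.

Lemma qq_next a n : 0 < a ->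
  qq a (S n) = qq a n * (a + INR n) / ((a + 2 * INR n + 1) * (a + 2 * INR n + 2)).
Proof.
  intro Ha. unfold qq.
  replace (2 * S n + 1)%nat with (S (S (2 * n + 1))) by lia.
  rewrite !poch_S. rewrite !S_INR, !plus_INR, !mult_INR. simpl (INR 2). simpl (INR 1).
  pose proof (INR_ge0 n). pose proof (poch_pos a n Ha). pose proof (poch_pos a (2 * n + 1) Ha).
  field. repeat split; lra.
Qed.

Lemma qq_shift a n : 0 < a ->
  qq (a + 1) n = qq a n * (a + INR n) / (a + 2 * INR n + 1).
Proof.
  intro Ha. unfold qq. rewrite !poch_shift by lra.
  rewrite !plus_INR, !mult_INR. simpl (INR 2). simpl (INR 1).
  pose proof (INR_ge0 n). pose proof (poch_pos a n Ha). pose proof (poch_pos a (2 * n + 1) Ha).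
  field. repeat split; lra.
Qed.

Lemma abs_ndiv_le num den q : 0 <= num -> 0 < den -> num <= q * den -> Rabs (- (num / den)) <= q.
Proof. intros. rewrite Rabs_Ropp. apply abs_div_le; assumption. Qed.

Lemma INR_S_shift k c : INR (S k) + c = (INR k + c) + 1.
Proof. rewrite S_INR. ring. Qed.

Lemma binom_6_step n :
  binom (6 * S n) (3 * S n) =
  binom (6 * n) (3 * n) * ((6 * INR n + 1) * (6 * INR n + 2) * (6 * INR n + 3) *
     (6 * INR n + 4) * (6 * INR n + 5) * (6 * INR n + 6)) /
   ((3 * INR n + 1) * (3 * INR n + 2) * (3 * INR n + 3) *
    ((3 * INR n + 1) * (3 * INR n + 2) * (3 * INR n + 3))).
Proof.
  unfold binom, Binomial.C.
  replace (6 * S n - 3 * S n)%nat with (S (S (S (3 * n)))) by lia.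
  replace (6 * n - 3 * n)%nat with (3 * n)%nat by lia.
  replace (3 * S n)%nat with (S (S (S (3 * n)))) by lia.
  replace (6 * S n)%nat with (S (S (S (S (S (S (6 * n))))))) by lia.
  rewrite !fact_S_INR. rewrite !S_INR, !mult_INR. simpl (INR 6). simpl (INR 3).
  pose proof (INR_fact_neq_0 (3 * n)). pose proof (INR_fact_neq_0 (6 * n)).
  pose proof (INR_ge0 n).
  field. repeat split; lra.
Qed.


Fixpoint ps (N : nat) (x : R) : R :=
  match N with
  | O => 0
  | S M => ps M x + (x ^ (3*M+2) / (3 * INR M + 2) - x ^ (3*M+4) / (3 * INR M + 4))
  end.
Fixpoint dps (N : nat) (x : R) : R :=
  match N with
  | O => 0
  | S M => dps M x + (x ^ (3*M+1) - x ^ (3*M+3))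
  end.


Lemma ps_derive N x : is_derive (ps N) x (dps N x).
Proof.
  induction N; cbn [ps dps].
  - auto_derive; auto.
  - apply (is_derive_plus (ps N)). exact IHN.
    assert (h2 : 0 < 3 * INR N + 2) by (pose proof (INR_ge0 N); lra).
    assert (h4 : 0 < 3 * INR N + 4) by (pose proof (INR_ge0 N); lra).
    auto_derive. auto.
    change (N + (N + (N + 0)))%nat with (3*N)%nat.
    replace (Init.Nat.pred (3*N+2)) with (3*N+1)%nat by lia.
    replace (Init.Nat.pred (3*N+4)) with (3*N+3)%nat by lia.
    rewrite !plus_INR, !mult_INR.
    replace (INR 3) with 3 by (simpl; ring). replace (INR 2) with 2 by (simpl; ring).
    replace (INR 4) with 4 by (simpl; ring).
    field. lra.
Qed.

Lemma dps_closed N x : dps N x = x * (1 + x) * (1 - x ^ (3 * N)) / (1 + x + x * x).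
Proof.
  assert (hq : 0 < 1 + x + x * x) by nra.
  induction N; cbn [dps].
  - simpl. field. lra.
  - rewrite IHN.
    replace (3 * S N)%nat with (3 * N + 3)%nat by lia.
    rewrite !pow_add. simpl. field. lra.
Qed.

Definition s3 := sqrt 3.
Lemma s3_pos : 0 < s3. Proof. apply Rlt_sqrt3_0. Qed.
Lemma s3_sq : s3 * s3 = 3. Proof. unfold s3. apply sqrt_sqrt. lra. Qed.

Definition HH N x := ps N x - x + 2 / s3 * atan ((2 * x + 1) / s3).
Definition dHH N x := dps N x - 1 + / (1 + x + x * x).

Lemma is_derive_eq (f : R -> R) x d1 d2 : is_derive f x d1 -> d1 = d2 -> is_derive f x d2.
Proof. intros H E; subst; exact H. Qed.

Lemma atan_part_derive x :
  is_derive (fun y => 2 / s3 * atan ((2 * y + 1) / s3)) x (/ (1 + x + x * x)).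
Proof.
  pose proof s3_pos as hs. pose proof s3_sq as hs2.
  assert (hq : 0 < 1 + x + x * x) by nra.
  eapply is_derive_eq.
  apply is_derive_scal.
  apply (is_derive_comp atan (fun y => (2 * y + 1) / s3) x (/ (1 + ((2 * x + 1) / s3)²)) (2 / s3)).
  apply is_derive_atan.
  auto_derive. lra. field. lra.
  unfold scal; simpl. unfold mult; simpl. unfold Rsqr.
  assert (hd : 1 + (2 * x + 1) / s3 * ((2 * x + 1) / s3) = 4 * (1 + x + x * x) / 3).
  { field_simplify; [| lra]. replace (s3 ^ 2) with 3 by (simpl; lra). lra. }
  rewrite hd. replace (2 / s3 * (2 / s3 * / (4 * (1 + x + x * x) / 3))) with (4 / (s3 * s3) * / (4 * (1 + x + x * x) / 3)) by (field; lra). rewrite hs2. field. lra.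
Qed.

Lemma HH_derive N x : is_derive (HH N) x (dHH N x).
Proof.
  unfold HH, dHH.
  assert (Hid : is_derive (fun y : R => y) x 1) by (auto_derive; auto).
  eapply is_derive_eq.
  apply (is_derive_plus (fun y => ps N y - y)).
  apply (is_derive_minus (ps N) (fun y => y)). apply ps_derive.
  exact Hid.
  apply atan_part_derive.
  unfold minus, opp; simpl. unfold plus; simpl. ring.
Qed.

Lemma dHH_closed N x : dHH N x = - (x ^ (3 * N) * x * (1 + x)) / (1 + x + x * x).
Proof.
  assert (hq : 0 < 1 + x + x * x) by nra.
  unfold dHH. rewrite dps_closed. field. lra.
Qed.

Definition GG N x := HH N x + x ^ (3 * N + 2) / (3 * INR N + 2).

Lemma GG_derive N x : is_derive (GG N) x (dHH N x + x ^ (3 * N + 1)).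
Proof.
  unfold GG.
  assert (h2 : 0 < 3 * INR N + 2) by (pose proof (INR_ge0 N); lra).
  assert (Hp : is_derive (fun y => y ^ (3 * N + 2) / (3 * INR N + 2)) x (x ^ (3 * N + 1))).
  { auto_derive. auto.
    change (N + (N + (N + 0)))%nat with (3*N)%nat.
    replace (Init.Nat.pred (3 * N + 2)) with (3 * N + 1)%nat by lia.
    rewrite plus_INR, mult_INR. replace (INR 3) with 3 by (simpl; ring).
    replace (INR 2) with 2 by (simpl; ring). field. lra. }
  apply (is_derive_plus (HH N)). apply HH_derive. exact Hp.
Qed.

Lemma cont_of_derive (f : R -> R) (df : R -> R) :
  (forall x, is_derive f x (df x)) -> forall x, continuity_pt f x.
Proof.
  intros H x. apply continuity_pt_filterlim.
  apply (ex_derive_continuous f x). exists (df x). apply H.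
Qed.

Lemma HH_bounds N : - / (3 * INR N + 2) <= HH N 1 - HH N 0 <= 0.
Proof.
  assert (h2 : 0 < 3 * INR N + 2) by (pose proof (INR_ge0 N); lra).
  split.
  - assert (Hm := MVT_gen (GG N) 0 1 (fun x => dHH N x + x ^ (3 * N + 1))).
    cbv zeta in Hm. rewrite Rmin_left, Rmax_right in Hm by lra.
    destruct Hm as [c [Hc Heq]].
    + intros x _. apply GG_derive.
    + intros x _. apply (cont_of_derive (GG N) (fun x => dHH N x + x ^ (3 * N + 1))).
      apply GG_derive.
    + unfold GG in Heq. rewrite dHH_closed in Heq.
      rewrite pow_ne_zero in Heq by lia. rewrite pow1 in Heq.
      assert (hq : 0 < 1 + c + c * c) by nra.
      assert (hp : 0 <= c ^ (3 * N)) by (apply pow_le; lra).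
      assert (E : - (c ^ (3 * N) * c * (1 + c)) / (1 + c + c * c) + c ^ (3 * N + 1)
                 = c ^ (3 * N) * (c * c * c) / (1 + c + c * c)).
      { rewrite pow_add. simpl. field. lra. }
      rewrite E in Heq.
      assert (0 <= c ^ (3 * N) * (c * c * c) / (1 + c + c * c)).
      { apply Rmult_le_pos. apply Rmult_le_pos. lra. apply Rmult_le_pos; [apply Rmult_le_pos|]; lra.
        left; apply Rinv_0_lt_compat; lra. }
      assert (0 < / (3 * INR N + 2)) by (apply Rinv_0_lt_compat; lra).
      replace (1 / (3 * INR N + 2)) with (/ (3 * INR N + 2)) in Heq by (field; lra).
      nra.
  - assert (Hm := MVT_gen (HH N) 0 1 (dHH N)).
    cbv zeta in Hm. rewrite Rmin_left, Rmax_right in Hm by lra.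
    destruct Hm as [c [Hc Heq]].
    + intros x _. apply HH_derive.
    + intros x _. apply (cont_of_derive (HH N) (dHH N)). apply HH_derive.
    + rewrite Heq, dHH_closed.
      assert (hq : 0 < 1 + c + c * c) by nra.
      assert (hp : 0 <= c ^ (3 * N)) by (apply pow_le; lra).
      assert (0 <= c ^ (3 * N) * c * (1 + c) / (1 + c + c * c)).
      { apply Rmult_le_pos. apply Rmult_le_pos. apply Rmult_le_pos; lra. lra.
        left; apply Rinv_0_lt_compat; lra. }
      replace (- (c ^ (3 * N) * c * (1 + c)) / (1 + c + c * c) * (1 - 0))
        with (- (c ^ (3 * N) * c * (1 + c) / (1 + c + c * c))) by (field; lra).
      lra.
Qed.


Lemma ps_0 N : ps N 0 = 0.
Proof.
  induction N; cbn [ps]. reflexivity.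
  rewrite IHN, !pow_i by lia. field.
  split; pose proof (INR_ge0 N); lra.
Qed.

Lemma ps_1 M : ps (S M) 1 = 2 * sum_n S1_term M.
Proof.
  induction M.
  - cbn [ps]. rewrite sum_O, !pow1. unfold S1_term. simpl. field.
  - cbn [ps] in *. rewrite IHM, sum_Sn. rewrite !pow1. unfold plus; cbn -[INR sum_n].
    unfold S1_term. rewrite S_INR.
    pose proof (INR_ge0 M). field. lra.
Qed.

Lemma atan_s3 : atan s3 = PI / 3.
Proof.
  unfold s3. rewrite <- tan_PI3. apply atan_tan. pose proof PI_RGT_0. lra.
Qed.
Lemma atan_is3 : atan (1 / s3) = PI / 6.
Proof.
  unfold s3. rewrite <- tan_PI6. apply atan_tan. pose proof PI_RGT_0. lra.
Qed.

Lemma HH_diff N : HH N 1 - HH N 0 = ps N 1 - 2 * (1/2 - sqrt 3 * PI / 18).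
Proof.
  unfold HH. rewrite ps_0.
  pose proof s3_pos. pose proof s3_sq.
  replace ((2 * 1 + 1) / s3) with s3 by (replace (2 * 1 + 1) with (s3 * s3) by lra; field; lra).
  replace ((2 * 0 + 1) / s3) with (1 / s3) by (field; lra).
  rewrite atan_s3, atan_is3. fold s3.
  replace (sqrt 3) with s3 by reflexivity.
  apply Rminus_diag_uniq. field_simplify; [| lra].
  replace (s3 ^ 2) with 3 by (simpl; lra). field. lra.
Qed.

Lemma lim_inv_lin : is_lim_seq (fun M => / (3 * INR (S M) + 2)) 0.
Proof.
  replace (Finite 0) with (Rbar_inv p_infty) by reflexivity.
  apply is_lim_seq_inv; [| discriminate].
  apply is_lim_seq_le_p_loc with (fun M => INR (S M)).
  exists O. intros n _. pose proof (INR_ge0 (S n)). lra.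
  apply (is_lim_seq_incr_1 INR p_infty). apply is_lim_seq_INR.
Qed.

Lemma S1_series : is_series S1_term (1/2 - sqrt 3 * PI / 18).
Proof.
  set (L := 1/2 - sqrt 3 * PI / 18).
  change (is_lim_seq (sum_n S1_term) L).
  apply (is_lim_seq_le_le (fun M => L - / (3 * INR (S M) + 2) / 2) _ (fun M => L)).
  - intro M. pose proof (HH_bounds (S M)) as Hb. rewrite HH_diff, ps_1 in Hb.
    fold L in Hb. split; lra.
  - assert (H0 : is_lim_seq (fun M => / (3 * INR (S M) + 2) / 2) 0).
    { replace (Finite 0) with (Rbar_mult 0 (/2)) by (simpl; f_equal; ring).
      apply is_lim_seq_scal_r, lim_inv_lin. }
    replace (Finite L) with (Finite (L - 0)) by (f_equal; ring).
    apply is_lim_seq_minus'. apply is_lim_seq_const. exact H0.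
  - apply is_lim_seq_const.
Qed.


Definition f1 k n := / (poch (INR k + 2/3) (S n) * poch (INR k + 4/3) (S n)).
Definition B1 n := (INR n + 1) * (3 * INR n + 1) * (3 * INR n + 5) / (18 * (2 * INR n + 1)).
Definition R1 k n := (2 * INR k + 3 * INR n + 3) / (2 * (2 * INR n + 1)).
Fixpoint P1 n := match n with O => 1 | S m => P1 m * B1 m end.
Definition F1 k n := 2/27 * P1 n * f1 k n.
Definition G1 k n := F1 k n * R1 k n.

Lemma f1_pos k n : 0 < f1 k n.
Proof.
  unfold f1. pose proof (INR_ge0 k).
  apply Rinv_0_lt_compat, Rmult_lt_0_compat; apply poch_pos; lra.
Qed.

Lemma f1_next k n : f1 k (S n) = f1 k n / ((INR k + 2/3 + INR n + 1) * (INR k + 4/3 + INR n + 1)).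
Proof.
  unfold f1. rewrite (poch_S _ (S n)), (poch_S _ (S n)), S_INR.
  pose proof (INR_ge0 k). pose proof (INR_ge0 n).
  pose proof (poch_pos (INR k + 2/3) (S n)). pose proof (poch_pos (INR k + 4/3) (S n)).
  field. repeat split; try lra. 
Qed.

Lemma f1_shift k n : f1 (S k) n = f1 k n * ((INR k + 2/3) * (INR k + 4/3))
   / ((INR k + 2/3 + INR n + 1) * (INR k + 4/3 + INR n + 1)).
Proof.
  unfold f1. pose proof (INR_ge0 k). pose proof (INR_ge0 n).
  replace (INR (S k) + 2/3) with ((INR k + 2/3) + 1) by (rewrite S_INR; ring).
  replace (INR (S k) + 4/3) with ((INR k + 4/3) + 1) by (rewrite S_INR; ring).
  rewrite !poch_shift by lra. rewrite S_INR.
  pose proof (poch_pos (INR k + 2/3) (S n) ltac:(lra)).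
  pose proof (poch_pos (INR k + 4/3) (S n) ltac:(lra)).
  field. repeat split; lra.
Qed.

Lemma F1_tele k n : F1 k n - F1 k (S n) = G1 k n - G1 (S k) n.
Proof.
  unfold G1, F1. cbn [P1]. rewrite f1_next, f1_shift. unfold R1, B1. rewrite S_INR.
  pose proof (INR_ge0 k). pose proof (INR_ge0 n).
  field. repeat split; lra.
Qed.

Lemma F1_0 k : F1 k O = 2/3 * S1_term k.
Proof.
  unfold F1, f1, S1_term. cbn [P1]. rewrite !poch_S. cbn [poch]. simpl (INR 0).
  pose proof (INR_ge0 k). field. split; lra.
Qed.

Lemma F1_ratio k n : exists r, F1 k (S n) = F1 k n * r /\ Rabs r <= 1/4.
Proof.
  pose proof (INR_ge0 k) as hk. pose proof (INR_ge0 n) as hn.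
  exists ((INR n + 1) * (3 * INR n + 1) * (3 * INR n + 5) /
          (18 * (2 * INR n + 1) * ((INR k + 2/3 + INR n + 1) * (INR k + 4/3 + INR n + 1)))).
  split.
  - unfold F1. cbn [P1]. rewrite f1_next. unfold B1. field. repeat split; lra.
  - apply abs_div_le. posi. apply Rmult_lt_0_compat. lra. apply Rmult_lt_0_compat; lra.
    apply Rge_le, Rminus_ge, Rle_ge. unfold Rminus. field_simplify.
    posi.
Qed.

Lemma S1_term_pos k : 0 <= S1_term k.
Proof. unfold S1_term. pose proof (INR_ge0 k). left; apply Rinv_0_lt_compat; nra. Qed.

Lemma F1_bound k n : Rabs (F1 k n) <= (Rabs (2/3) * (1/4) ^ n) * S1_term k.
Proof.
  apply (F_bound F1 (2/3) (1/4) S1_term). lra. apply F1_0. apply S1_term_pos. apply F1_ratio.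
Qed.

Lemma R1_bound k n : Rabs (R1 k n) <= (3 * INR n + 3) * (INR k + 1).
Proof.
  pose proof (INR_ge0 k) as hk. pose proof (INR_ge0 n) as hn.
  unfold R1. apply abs_div_le. lra. lra.
  apply Rge_le, Rminus_ge, Rle_ge. unfold Rminus. field_simplify. posi.
Qed.

Lemma G1_lim n : is_lim_seq (fun k => G1 k n) 0.
Proof.
  apply (G_lim _ ((Rabs (2/3) * (1/4) ^ n) * (3 * INR n + 3))).
  intro k. unfold G1. rewrite Rabs_mult.
  replace (Rabs (2 / 3) * (1 / 4) ^ n * (3 * INR n + 3) * ((INR k + 1) * S1_term k))
    with ((Rabs (2/3) * (1/4) ^ n * S1_term k) * ((3 * INR n + 3) * (INR k + 1))) by ring.
  apply Rmult_le_compat; try apply Rabs_pos. apply F1_bound. apply R1_bound.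
Qed.

Definition a1 (n : nat) : R :=
  / ((3 * INR n + 1) * (3 * INR n + 4) * binom (2 * n + 2)%nat (n + 1)%nat).

Lemma binom_pos n k : (k <= n)%nat -> 0 < binom n k.
Proof.
  intro H. unfold binom, Binomial.C.
  apply Rmult_lt_0_compat. apply lt_0_INR, lt_O_fact.
  apply Rinv_0_lt_compat, Rmult_lt_0_compat; apply lt_0_INR, lt_O_fact.
Qed.

Lemma G1_0 n : G1 O n = a1 n.
Proof.
  induction n.
  - unfold G1, F1, f1, R1, a1, binom, Binomial.C. cbn [P1 poch].
    simpl. field.
  - assert (E : G1 O (S n) = G1 O n *
      ((INR n + 1) * (3 * INR n + 1) * (3 * INR n + 5) /
          (18 * (2 * INR n + 1) * ((INR 0 + 2/3 + INR n + 1) * (INR 0 + 4/3 + INR n + 1))))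
      * (R1 O (S n) / R1 O n)).
    { unfold G1, F1. cbn [P1]. rewrite f1_next. unfold B1, R1. rewrite S_INR. simpl (INR 0).
      pose proof (INR_ge0 n). pose proof (f1_pos O n).
      field. repeat split; lra. }
    rewrite E, IHn. unfold a1, R1. rewrite binom_mid_step. rewrite S_INR. simpl (INR 0).
    pose proof (INR_ge0 n). pose proof (binom_pos (2 * n + 2) (n + 1) ltac:(lia)).
    field. repeat split; lra.
Qed.

Lemma series1 : is_series a1 (2/3 * (1/2 - sqrt 3 * PI / 18)).
Proof.
  apply (wz_series a1 S1_term F1 G1 (fun n => Rabs (2/3) * (1/4) ^ n)).
  - apply S1_series.
  - apply S1_term_pos.
  - apply F1_0.
  - apply F1_tele.
  - apply G1_lim.
  - apply G1_0.
  - apply F1_bound.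
  - apply beta_lim. lra.
Qed.


Definition f2 k n := qq (INR k + 2/3) n / (INR k + 4/3 + INR n).
Definition B2 n := (3 * INR n + 1) / 3.
Definition R2 k n := (INR k ^ 2 + 3 * (INR n + 1) * INR k + (27 * INR n ^ 2 + 51 * INR n + 23) / 9)
   / ((INR n + 1) * (INR k + 2 * INR n + 5/3)).
Fixpoint P2 n := match n with O => 1 | S m => P2 m * B2 m end.
Definition F2 k n := 10/3 * P2 n * f2 k n.
Definition G2 k n := F2 k n * R2 k n.

Lemma f2_pos k n : 0 < f2 k n.
Proof.
  unfold f2. pose proof (INR_ge0 k). pose proof (INR_ge0 n).
  apply Rmult_lt_0_compat. apply qq_pos; lra. apply Rinv_0_lt_compat; lra.
Qed.

Lemma f2_next k n : f2 k (S n) = f2 k n *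
  ((INR k + 2/3 + INR n) / ((INR k + 2/3 + 2 * INR n + 1) * (INR k + 2/3 + 2 * INR n + 2))
   * ((INR k + 4/3 + INR n) / (INR k + 4/3 + INR n + 1))).
Proof.
  unfold f2. pose proof (INR_ge0 k). pose proof (INR_ge0 n).
  rewrite qq_next by lra. rewrite S_INR.
  pose proof (qq_pos (INR k + 2/3) n ltac:(lra)).
  field. repeat split; lra.
Qed.

Lemma f2_shift k n : f2 (S k) n = f2 k n *
  ((INR k + 2/3 + INR n) / (INR k + 2/3 + 2 * INR n + 1)
   * ((INR k + 4/3 + INR n) / (INR k + 4/3 + INR n + 1))).
Proof.
  unfold f2. pose proof (INR_ge0 k). pose proof (INR_ge0 n).
  rewrite INR_S_shift, qq_shift by lra. rewrite S_INR.
  pose proof (qq_pos (INR k + 2/3) n ltac:(lra)).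
  field. repeat split; lra.
Qed.

Lemma F2_tele k n : F2 k n - F2 k (S n) = G2 k n - G2 (S k) n.
Proof.
  unfold G2, F2. cbn [P2]. rewrite f2_next, f2_shift. unfold R2, B2. rewrite S_INR.
  pose proof (INR_ge0 k). pose proof (INR_ge0 n).
  field. repeat split; lra.
Qed.

Lemma F2_0 k : F2 k O = 30 * S1_term k.
Proof.
  unfold F2, f2, qq, S1_term. cbn [P2]. replace (2 * 0 + 1)%nat with 1%nat by lia.
  rewrite poch_S. cbn [poch]. simpl (INR 0).
  pose proof (INR_ge0 k). field. split; lra.
Qed.

Lemma F2_ratio k n : exists r, F2 k (S n) = F2 k n * r /\ Rabs r <= 1/2.
Proof.
  pose proof (INR_ge0 k) as hk. pose proof (INR_ge0 n) as hn.
  exists ((3 * INR n + 1) * (INR k + 2/3 + INR n) * (INR k + 4/3 + INR n) /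
     (3 * ((INR k + 2/3 + 2 * INR n + 1) * (INR k + 2/3 + 2 * INR n + 2)) * (INR k + 4/3 + INR n + 1))).
  split.
  - unfold F2. cbn [P2]. rewrite f2_next. unfold B2. field. repeat split; lra.
  - apply abs_div_le. posi. repeat apply Rmult_lt_0_compat; lra.
    apply Rge_le, Rminus_ge, Rle_ge. unfold Rminus. field_simplify. posi.
Qed.

Lemma F2_bound k n : Rabs (F2 k n) <= (Rabs 30 * (1/2) ^ n) * S1_term k.
Proof.
  apply (F_bound F2 30 (1/2) S1_term). lra. apply F2_0. apply S1_term_pos. apply F2_ratio.
Qed.

Lemma R2_bound k n : Rabs (R2 k n) <= (20 * (INR n + 1)) * (INR k + 1).
Proof.
  pose proof (INR_ge0 k) as hk. pose proof (INR_ge0 n) as hn.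
  unfold R2. apply abs_div_le. posi. repeat apply Rmult_lt_0_compat; lra.
  apply Rge_le, Rminus_ge, Rle_ge. unfold Rminus. field_simplify. posi.
Qed.

Lemma G2_lim n : is_lim_seq (fun k => G2 k n) 0.
Proof.
  apply (G_lim _ ((Rabs 30 * (1/2) ^ n) * (20 * (INR n + 1)))).
  intro k. unfold G2. rewrite Rabs_mult.
  replace (Rabs 30 * (1/2) ^ n * (20 * (INR n + 1)) * ((INR k + 1) * S1_term k))
    with ((Rabs 30 * (1/2) ^ n * S1_term k) * ((20 * (INR n + 1)) * (INR k + 1))) by ring.
  apply Rmult_le_compat; try apply Rabs_pos. apply F2_bound. apply R2_bound.
Qed.

Definition a2 (n : nat) : R :=
  (27 * INR n ^ 2 + 51 * INR n + 23) * poch (2/3) n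
       / ((3 * INR n + 1) * (3 * INR n + 4) * (INR n + 1) * poch (11/6) n)
       / 4 ^ n.

Lemma G2_0 n : G2 O n = a2 n.
Proof.
  induction n.
  - unfold G2, F2, f2, qq, R2, a2. simpl. field.
  - assert (E : G2 O (S n) = G2 O n *
      ((3 * INR n + 1) * (INR 0 + 2/3 + INR n) * (INR 0 + 4/3 + INR n) /
     (3 * ((INR 0 + 2/3 + 2 * INR n + 1) * (INR 0 + 2/3 + 2 * INR n + 2)) * (INR 0 + 4/3 + INR n + 1)))
      * (R2 O (S n) / R2 O n)).
    { unfold G2, F2. cbn [P2]. rewrite f2_next. unfold B2, R2. rewrite S_INR. simpl (INR 0).
      pose proof (INR_ge0 n). pose proof (f2_pos O n).
      field. repeat split; try lra. nra. }
    rewrite E, IHn. unfold a2, R2. rewrite !poch_S, S_INR. simpl (INR 0).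
    pose proof (INR_ge0 n). pose proof (poch_pos (2/3) n ltac:(lra)).
    pose proof (poch_pos (11/6) n ltac:(lra)).
    pose proof (pow_lt 4 n ltac:(lra)).
    simpl pow. field. repeat split; try lra. nra.
Qed.


Definition f3 k n := qq (INR k + 2/3) n * qq (INR k + 4/3) n.
Definition R3 k n := (INR k ^ 3 / 2 + (13 * INR n + 11) / 4 * INR k ^ 2
   + (126 * INR n ^ 2 + 216 * INR n + 89) / 18 * INR k
   + (189 * INR n ^ 3 + 495 * INR n ^ 2 + 414 * INR n + 110) / 36)
   / ((INR n + 1/2) * (INR k + 2 * INR n + 5/3) * (INR k + 2 * INR n + 7/3)).
Fixpoint P3 n := match n with O => 1 | S m => P3 m * B1 m end.
Definition F3 k n := 16/9 * P3 n * f3 k n.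
Definition G3 k n := F3 k n * R3 k n.

Lemma f3_pos k n : 0 < f3 k n.
Proof.
  unfold f3. pose proof (INR_ge0 k).
  apply Rmult_lt_0_compat; apply qq_pos; lra.
Qed.

Lemma f3_next k n : f3 k (S n) = f3 k n *
  ((INR k + 2/3 + INR n) / ((INR k + 2/3 + 2 * INR n + 1) * (INR k + 2/3 + 2 * INR n + 2))
   * ((INR k + 4/3 + INR n) / ((INR k + 4/3 + 2 * INR n + 1) * (INR k + 4/3 + 2 * INR n + 2)))).
Proof.
  unfold f3. pose proof (INR_ge0 k). pose proof (INR_ge0 n).
  rewrite !qq_next by lra.
  pose proof (qq_pos (INR k + 2/3) n ltac:(lra)). pose proof (qq_pos (INR k + 4/3) n ltac:(lra)).
  field. repeat split; lra.
Qed.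

Lemma f3_shift k n : f3 (S k) n = f3 k n *
  ((INR k + 2/3 + INR n) / (INR k + 2/3 + 2 * INR n + 1)
   * ((INR k + 4/3 + INR n) / (INR k + 4/3 + 2 * INR n + 1))).
Proof.
  unfold f3. pose proof (INR_ge0 k). pose proof (INR_ge0 n).
  rewrite !INR_S_shift, !qq_shift by lra.
  pose proof (qq_pos (INR k + 2/3) n ltac:(lra)). pose proof (qq_pos (INR k + 4/3) n ltac:(lra)).
  field. repeat split; lra.
Qed.

Lemma F3_tele k n : F3 k n - F3 k (S n) = G3 k n - G3 (S k) n.
Proof.
  unfold G3, F3. cbn [P3]. rewrite f3_next, f3_shift. unfold R3, B1. rewrite S_INR.
  pose proof (INR_ge0 k). pose proof (INR_ge0 n).
  field. repeat split; lra.
Qed.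

Lemma F3_0 k : F3 k O = 16 * S1_term k.
Proof.
  unfold F3, f3, qq, S1_term. cbn [P3]. replace (2 * 0 + 1)%nat with 1%nat by lia.
  rewrite !poch_S. cbn [poch]. simpl (INR 0).
  pose proof (INR_ge0 k). field. split; lra.
Qed.

Definition r3 k n := (INR n + 1) * (3 * INR n + 1) * (3 * INR n + 5) * (INR k + 2/3 + INR n) * (INR k + 4/3 + INR n) /
  (18 * (2 * INR n + 1) * ((INR k + 2/3 + 2 * INR n + 1) * (INR k + 2/3 + 2 * INR n + 2))
     * ((INR k + 4/3 + 2 * INR n + 1) * (INR k + 4/3 + 2 * INR n + 2))).

Lemma F3_next k n : F3 k (S n) = F3 k n * r3 k n.
Proof.
  pose proof (INR_ge0 k) as hk. pose proof (INR_ge0 n) as hn.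
  unfold F3. cbn [P3]. rewrite f3_next. unfold B1, r3. field. repeat split; lra.
Qed.

Lemma F3_ratio k n : exists r, F3 k (S n) = F3 k n * r /\ Rabs r <= 1/4.
Proof.
  pose proof (INR_ge0 k) as hk. pose proof (INR_ge0 n) as hn.
  exists (r3 k n). split. apply F3_next.
  unfold r3. apply abs_div_le. posi. repeat apply Rmult_lt_0_compat; lra.
  apply Rge_le, Rminus_ge, Rle_ge. unfold Rminus. field_simplify. posi.
Qed.

Lemma F3_bound k n : Rabs (F3 k n) <= (Rabs 16 * (1/4) ^ n) * S1_term k.
Proof.
  apply (F_bound F3 16 (1/4) S1_term). lra. apply F3_0. apply S1_term_pos. apply F3_ratio.
Qed.

Lemma R3_bound k n : Rabs (R3 k n) <= (20 * (INR n + 1)) * (INR k + 1).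
Proof.
  pose proof (INR_ge0 k) as hk. pose proof (INR_ge0 n) as hn.
  unfold R3. apply abs_div_le. posi. repeat apply Rmult_lt_0_compat; lra.
  apply Rge_le, Rminus_ge, Rle_ge. unfold Rminus. field_simplify. posi.
Qed.

Lemma G3_lim n : is_lim_seq (fun k => G3 k n) 0.
Proof.
  apply (G_lim _ ((Rabs 16 * (1/4) ^ n) * (20 * (INR n + 1)))).
  intro k. unfold G3. rewrite Rabs_mult.
  replace (Rabs 16 * (1/4) ^ n * (20 * (INR n + 1)) * ((INR k + 1) * S1_term k))
    with ((Rabs 16 * (1/4) ^ n * S1_term k) * ((20 * (INR n + 1)) * (INR k + 1))) by ring.
  apply Rmult_le_compat; try apply Rabs_pos. apply F3_bound. apply R3_bound.
Qed.

Definition a3 (n : nat) : R :=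
  (189 * INR n ^ 3 + 495 * INR n ^ 2 + 414 * INR n + 110)
       / ((6 * INR n + 1) * (6 * INR n + 7) * (6 * INR n + 5) * (2 * INR n + 1))
       / binom (6 * n)%nat (3 * n)%nat.

Lemma G3_0 n : G3 O n = a3 n.
Proof.
  induction n.
  - unfold G3, F3, f3, qq, R3, a3, binom, Binomial.C. simpl. field.
  - assert (E : G3 O (S n) = G3 O n * r3 O n * (R3 O (S n) / R3 O n)).
    { unfold G3. rewrite F3_next. unfold R3. rewrite S_INR. simpl (INR 0).
      pose proof (INR_ge0 n). pose proof (f3_pos O n).
      field. repeat split; try lra. nra. }
    rewrite E, IHn. unfold a3, R3, r3. rewrite binom_6_step, S_INR. simpl (INR 0).
    pose proof (INR_ge0 n). pose proof (binom_pos (6 * n) (3 * n) ltac:(lia)).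
    field. repeat split; try lra. nra.
Qed.


Definition f4 k n := qq (INR k + 2/3) n / (INR k + 4/3 + 2 * INR n).
Definition B4 n := - ((3 * INR n + 5) / 3).
Definition R4 k n := (INR k ^ 3 + (7 * INR n + 19/3) * INR k ^ 2
   + (15 * INR n ^ 2 + 80 * INR n / 3 + 104/9) * INR k
   + (270 * INR n ^ 3 + 720 * INR n ^ 2 + 633 * INR n + 185) / 27)
   / ((INR n + 1) * (INR k + 2 * INR n + 5/3) * (INR k + 2 * INR n + 7/3)).
Fixpoint P4 n := match n with O => 1 | S m => P4 m * B4 m end.
Definition F4 k n := 40/3 * P4 n * f4 k n.
Definition G4 k n := F4 k n * R4 k n.

Lemma f4_pos k n : 0 < f4 k n.
Proof.
  unfold f4. pose proof (INR_ge0 k). pose proof (INR_ge0 n).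
  apply Rmult_lt_0_compat. apply qq_pos; lra. apply Rinv_0_lt_compat; lra.
Qed.

Lemma f4_next k n : f4 k (S n) = f4 k n *
  ((INR k + 2/3 + INR n) / ((INR k + 2/3 + 2 * INR n + 1) * (INR k + 2/3 + 2 * INR n + 2))
   * ((INR k + 4/3 + 2 * INR n) / (INR k + 4/3 + 2 * INR n + 2))).
Proof.
  unfold f4. pose proof (INR_ge0 k). pose proof (INR_ge0 n).
  rewrite qq_next by lra. rewrite S_INR.
  pose proof (qq_pos (INR k + 2/3) n ltac:(lra)).
  field. repeat split; lra.
Qed.

Lemma f4_shift k n : f4 (S k) n = f4 k n *
  ((INR k + 2/3 + INR n) / (INR k + 2/3 + 2 * INR n + 1)
   * ((INR k + 4/3 + 2 * INR n) / (INR k + 4/3 + 2 * INR n + 1))).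
Proof.
  unfold f4. pose proof (INR_ge0 k). pose proof (INR_ge0 n).
  rewrite INR_S_shift, qq_shift by lra. rewrite S_INR.
  pose proof (qq_pos (INR k + 2/3) n ltac:(lra)).
  field. repeat split; lra.
Qed.

Lemma F4_tele k n : F4 k n - F4 k (S n) = G4 k n - G4 (S k) n.
Proof.
  unfold G4, F4. cbn [P4]. rewrite f4_next, f4_shift. unfold R4, B4. rewrite S_INR.
  pose proof (INR_ge0 k). pose proof (INR_ge0 n).
  field. repeat split; lra.
Qed.

Lemma F4_0 k : F4 k O = 120 * S1_term k.
Proof.
  unfold F4, f4, qq, S1_term. cbn [P4]. replace (2 * 0 + 1)%nat with 1%nat by lia.
  rewrite poch_S. cbn [poch]. simpl (INR 0).
  pose proof (INR_ge0 k). field. split; lra.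
Qed.

Definition r4 k n := - ((3 * INR n + 5) * (INR k + 2/3 + INR n) * (INR k + 4/3 + 2 * INR n) /
  (3 * ((INR k + 2/3 + 2 * INR n + 1) * (INR k + 2/3 + 2 * INR n + 2)) * (INR k + 4/3 + 2 * INR n + 2))).

Lemma F4_next k n : F4 k (S n) = F4 k n * r4 k n.
Proof.
  pose proof (INR_ge0 k) as hk. pose proof (INR_ge0 n) as hn.
  unfold F4. cbn [P4]. rewrite f4_next. unfold B4, r4. field. repeat split; lra.
Qed.

Lemma F4_ratio k n : exists r, F4 k (S n) = F4 k n * r /\ Rabs r <= 3/4.
Proof.
  pose proof (INR_ge0 k) as hk. pose proof (INR_ge0 n) as hn.
  exists (r4 k n). split. apply F4_next.
  unfold r4. apply abs_ndiv_le. posi. repeat apply Rmult_lt_0_compat; lra.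
  apply Rge_le, Rminus_ge, Rle_ge. unfold Rminus. field_simplify. posi.
Qed.

Lemma F4_bound k n : Rabs (F4 k n) <= (Rabs 120 * (3/4) ^ n) * S1_term k.
Proof.
  apply (F_bound F4 120 (3/4) S1_term). lra. apply F4_0. apply S1_term_pos. apply F4_ratio.
Qed.

Lemma R4_bound k n : Rabs (R4 k n) <= (20 * (INR n + 1)) * (INR k + 1).
Proof.
  pose proof (INR_ge0 k) as hk. pose proof (INR_ge0 n) as hn.
  unfold R4. apply abs_div_le. posi. repeat apply Rmult_lt_0_compat; lra.
  apply Rge_le, Rminus_ge, Rle_ge. unfold Rminus. field_simplify. posi.
Qed.

Lemma G4_lim n : is_lim_seq (fun k => G4 k n) 0.
Proof.
  apply (G_lim _ ((Rabs 120 * (3/4) ^ n) * (20 * (INR n + 1)))).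
  intro k. unfold G4. rewrite Rabs_mult.
  replace (Rabs 120 * (3/4) ^ n * (20 * (INR n + 1)) * ((INR k + 1) * S1_term k))
    with ((Rabs 120 * (3/4) ^ n * S1_term k) * ((20 * (INR n + 1)) * (INR k + 1))) by ring.
  apply Rmult_le_compat; try apply Rabs_pos. apply F4_bound. apply R4_bound.
Qed.

Definition a4 (n : nat) : R :=
  (270 * INR n ^ 3 + 720 * INR n ^ 2 + 633 * INR n + 185)
       / ((INR n + 1) * (6 * INR n + 7))
       * (poch (2/3) n ^ 2 / (poch (4/3) n * poch (11/6) n))
       / (-4) ^ n.

Lemma G4_0 n : G4 O n = a4 n.
Proof.
  induction n.
  - unfold G4, F4, f4, qq, R4, a4. simpl. field.
  - assert (E : G4 O (S n) = G4 O n * r4 O n * (R4 O (S n) / R4 O n)).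
    { unfold G4. rewrite F4_next. unfold R4. rewrite S_INR. simpl (INR 0).
      pose proof (INR_ge0 n). pose proof (f4_pos O n).
      field. repeat split; try lra. nra. }
    rewrite E, IHn. unfold a4, R4, r4. rewrite !poch_S, S_INR. simpl (INR 0).
    pose proof (INR_ge0 n). pose proof (poch_pos (2/3) n ltac:(lra)).
    pose proof (poch_pos (4/3) n ltac:(lra)). pose proof (poch_pos (11/6) n ltac:(lra)).
    pose proof (pow_nonzero (-4) n ltac:(lra)).
    simpl pow. field. repeat split; try lra. nra.
Qed.


Definition f5 k n := qq (INR k + 2/3) n / poch (INR k + 4/3) (S n).
Definition B5 n := - ((INR n + 1) * (6 * INR n + 1) * (3 * INR n + 2) / (9 * (2 * INR n + 1))).
Definition R5 k n := (INR k ^ 2 / 2 + (2 * INR n + 19/12) * INR k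
   + (30 * INR n ^ 2 + 45 * INR n + 16) / 12)
   / ((INR n + 1/2) * (INR k + 2 * INR n + 5/3)).
Fixpoint P5 n := match n with O => 1 | S m => P5 m * B5 m end.
Definition F5 k n := 80/9 * P5 n * f5 k n.
Definition G5 k n := F5 k n * R5 k n.

Lemma f5_pos k n : 0 < f5 k n.
Proof.
  unfold f5. pose proof (INR_ge0 k). pose proof (INR_ge0 n).
  apply Rmult_lt_0_compat. apply qq_pos; lra. apply Rinv_0_lt_compat, poch_pos; lra.
Qed.

Lemma f5_next k n : f5 k (S n) = f5 k n *
  ((INR k + 2/3 + INR n) / ((INR k + 2/3 + 2 * INR n + 1) * (INR k + 2/3 + 2 * INR n + 2))
   * (1 / (INR k + 4/3 + INR n + 1))).
Proof.
  unfold f5. pose proof (INR_ge0 k). pose proof (INR_ge0 n).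
  rewrite qq_next by lra. rewrite (poch_S _ (S n)), S_INR.
  pose proof (qq_pos (INR k + 2/3) n ltac:(lra)).
  pose proof (poch_pos (INR k + 4/3) (S n) ltac:(lra)).
  field. repeat split; lra.
Qed.

Lemma f5_shift k n : f5 (S k) n = f5 k n *
  ((INR k + 2/3 + INR n) / (INR k + 2/3 + 2 * INR n + 1)
   * ((INR k + 4/3) / (INR k + 4/3 + INR n + 1))).
Proof.
  unfold f5. pose proof (INR_ge0 k). pose proof (INR_ge0 n).
  rewrite !INR_S_shift, qq_shift, poch_shift by lra. rewrite S_INR.
  pose proof (qq_pos (INR k + 2/3) n ltac:(lra)).
  pose proof (poch_pos (INR k + 4/3) (S n) ltac:(lra)).
  field. repeat split; lra.
Qed.

Lemma F5_tele k n : F5 k n - F5 k (S n) = G5 k n - G5 (S k) n.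
Proof.
  unfold G5, F5. cbn [P5]. rewrite f5_next, f5_shift. unfold R5, B5. rewrite S_INR.
  pose proof (INR_ge0 k). pose proof (INR_ge0 n).
  field. repeat split; lra.
Qed.

Lemma F5_0 k : F5 k O = 80 * S1_term k.
Proof.
  unfold F5, f5, qq, S1_term. cbn [P5]. replace (2 * 0 + 1)%nat with 1%nat by lia.
  rewrite !poch_S. cbn [poch]. simpl (INR 0).
  pose proof (INR_ge0 k). field. split; lra.
Qed.

Definition r5 k n := - ((INR n + 1) * (6 * INR n + 1) * (3 * INR n + 2) * (INR k + 2/3 + INR n) /
  (9 * (2 * INR n + 1) * ((INR k + 2/3 + 2 * INR n + 1) * (INR k + 2/3 + 2 * INR n + 2)) * (INR k + 4/3 + INR n + 1))).

Lemma F5_next k n : F5 k (S n) = F5 k n * r5 k n.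
Proof.
  pose proof (INR_ge0 k) as hk. pose proof (INR_ge0 n) as hn.
  unfold F5. cbn [P5]. rewrite f5_next. unfold B5, r5. field. repeat split; lra.
Qed.

Lemma F5_ratio k n : exists r, F5 k (S n) = F5 k n * r /\ Rabs r <= 1/2.
Proof.
  pose proof (INR_ge0 k) as hk. pose proof (INR_ge0 n) as hn.
  exists (r5 k n). split. apply F5_next.
  unfold r5. apply abs_ndiv_le. posi. repeat apply Rmult_lt_0_compat; lra.
  apply Rge_le, Rminus_ge, Rle_ge. unfold Rminus. field_simplify. posi.
Qed.

Lemma F5_bound k n : Rabs (F5 k n) <= (Rabs 80 * (1/2) ^ n) * S1_term k.
Proof.
  apply (F_bound F5 80 (1/2) S1_term). lra. apply F5_0. apply S1_term_pos. apply F5_ratio.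
Qed.

Lemma R5_bound k n : Rabs (R5 k n) <= (20 * (INR n + 1)) * (INR k + 1).
Proof.
  pose proof (INR_ge0 k) as hk. pose proof (INR_ge0 n) as hn.
  unfold R5. apply abs_div_le. posi. repeat apply Rmult_lt_0_compat; lra.
  apply Rge_le, Rminus_ge, Rle_ge. unfold Rminus. field_simplify. posi.
Qed.

Lemma G5_lim n : is_lim_seq (fun k => G5 k n) 0.
Proof.
  apply (G_lim _ ((Rabs 80 * (1/2) ^ n) * (20 * (INR n + 1)))).
  intro k. unfold G5. rewrite Rabs_mult.
  replace (Rabs 80 * (1/2) ^ n * (20 * (INR n + 1)) * ((INR k + 1) * S1_term k))
    with ((Rabs 80 * (1/2) ^ n * S1_term k) * ((20 * (INR n + 1)) * (INR k + 1))) by ring.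
  apply Rmult_le_compat; try apply Rabs_pos. apply F5_bound. apply R5_bound.
Qed.

Definition a5 (n : nat) : R :=
  (30 * INR n ^ 2 + 45 * INR n + 16)
       * (poch (1/6) n * poch (2/3) n ^ 2 * poch 1 n
          / (poch (4/3) n * poch (7/3) n * poch (3/2) n * poch (11/6) n))
       / (-4) ^ n.

Lemma G5_0 n : G5 O n = a5 n.
Proof.
  induction n.
  - unfold G5, F5, f5, qq, R5, a5. simpl. field.
  - assert (E : G5 O (S n) = G5 O n * r5 O n * (R5 O (S n) / R5 O n)).
    { unfold G5. rewrite F5_next. unfold R5. rewrite S_INR. simpl (INR 0).
      pose proof (INR_ge0 n). pose proof (f5_pos O n).
      field. repeat split; try lra. nra. }
    rewrite E, IHn. unfold a5, R5, r5. rewrite !poch_S, S_INR. simpl (INR 0).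
    pose proof (INR_ge0 n). pose proof (poch_pos (2/3) n ltac:(lra)).
    pose proof (poch_pos (1/6) n ltac:(lra)). pose proof (poch_pos 1 n ltac:(lra)).
    pose proof (poch_pos (4/3) n ltac:(lra)). pose proof (poch_pos (11/6) n ltac:(lra)).
    pose proof (poch_pos (7/3) n ltac:(lra)). pose proof (poch_pos (3/2) n ltac:(lra)).
    pose proof (pow_nonzero (-4) n ltac:(lra)).
    simpl pow. field. repeat split; try lra. nra.
Qed.

Lemma series2 : is_series a2 (30 * (1/2 - sqrt 3 * PI / 18)).
Proof.
  apply (wz_series a2 S1_term F2 G2 (fun n => Rabs 30 * (1/2) ^ n)).
  - apply S1_series.
  - apply S1_term_pos.
  - apply F2_0.
  - apply F2_tele.
  - apply G2_lim.
  - apply G2_0.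
  - apply F2_bound.
  - apply beta_lim. lra.
Qed.


Lemma series3 : is_series a3 (16 * (1/2 - sqrt 3 * PI / 18)).
Proof.
  apply (wz_series a3 S1_term F3 G3 (fun n => Rabs 16 * (1/4) ^ n)).
  - apply S1_series.
  - apply S1_term_pos.
  - apply F3_0.
  - apply F3_tele.
  - apply G3_lim.
  - apply G3_0.
  - apply F3_bound.
  - apply beta_lim. lra.
Qed.


Lemma series4 : is_series a4 (120 * (1/2 - sqrt 3 * PI / 18)).
Proof.
  apply (wz_series a4 S1_term F4 G4 (fun n => Rabs 120 * (3/4) ^ n)).
  - apply S1_series.
  - apply S1_term_pos.
  - apply F4_0.
  - apply F4_tele.
  - apply G4_lim.
  - apply G4_0.
  - apply F4_bound.
  - apply beta_lim. lra.
Qed.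


Lemma series5 : is_series a5 (80 * (1/2 - sqrt 3 * PI / 18)).
Proof.
  apply (wz_series a5 S1_term F5 G5 (fun n => Rabs 80 * (1/2) ^ n)).
  - apply S1_series.
  - apply S1_term_pos.
  - apply F5_0.
  - apply F5_tele.
  - apply G5_lim.
  - apply G5_0.
  - apply F5_bound.
  - apply beta_lim. lra.
Qed.

Theorem proposition3p2 :
  is_series S1_term (1/2 - sqrt 3 * PI / 18) /\
  (let S1 := 1/2 - sqrt 3 * PI / 18 in
   is_series (fun n : nat =>
       / ((3 * INR n + 1) * (3 * INR n + 4) * binom (2 * n + 2)%nat (n + 1)%nat))
     (2/3 * S1) /\
   is_series (fun n : nat =>
       (27 * INR n ^ 2 + 51 * INR n + 23) * poch (2/3) n
       / ((3 * INR n + 1) * (3 * INR n + 4) * (INR n + 1) * poch (11/6) n)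
       / 4 ^ n)
     (30 * S1) /\
   is_series (fun n : nat =>
       (189 * INR n ^ 3 + 495 * INR n ^ 2 + 414 * INR n + 110)
       / ((6 * INR n + 1) * (6 * INR n + 7) * (6 * INR n + 5) * (2 * INR n + 1))
       / binom (6 * n)%nat (3 * n)%nat)
     (16 * S1) /\
   is_series (fun n : nat =>
       (270 * INR n ^ 3 + 720 * INR n ^ 2 + 633 * INR n + 185)
       / ((INR n + 1) * (6 * INR n + 7))
       * (poch (2/3) n ^ 2 / (poch (4/3) n * poch (11/6) n))
       / (-4) ^ n)
     (120 * S1) /\
   is_series (fun n : nat =>
       (30 * INR n ^ 2 + 45 * INR n + 16)
       * (poch (1/6) n * poch (2/3) n ^ 2 * poch 1 n
          / (poch (4/3) n * poch (7/3) n * poch (3/2) n * poch (11/6) n))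
       / (-4) ^ n)
     (80 * S1)).

Proof.
  split. exact S1_series.
  cbv zeta.
  split. exact series1.
  split. exact series2.
  split. exact series3.
  split. exact series4.
  exact series5.
Qed.
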